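(* Let $0<q<1$, $\Sigma\sim\mathrm{Mallows}(\mathbb{Z},q)$, $I_n:=\{-n,\dots,n\}$ and $J_n:=\{-n+1,\dots,n\}$. Almost surely there exists a (random) $N\in\mathbb{N}$ such that $\Sigma_{I_n}(i)=\Sigma_{J_n}(i)=\Sigma(i)$ for all $n\ge N$ and all $i$ with $|i|\le n-\log^2 n$.
   Context: For a finite set $A\subseteq\mathbb{Z}$ and a bijection $\pi:A\to A$, $\mathrm{inv}(\pi)$ is the number of pairs $i<j$ in $A$ with $\pi(i)>\pi(j)$, and $\Pi_A\sim\mathrm{Mallows}(A,q)$ means $\mathbb{P}(\Pi_A=\pi)\propto q^{\mathrm{inv}(\pi)}$ over bijections $\pi$ of $A$. For a bijection $\sigma$ of a set $B\subseteq\mathbb{Z}$ and finite $A\subseteq B$, the pattern $\sigma_A:A\to A$ is defined by $\sigma_A(a)=a_{(i)}$ when $\sigma(a)$ is the $i$-th smallest element of $\sigma[A]$, where $a_{(i)}$ is the $i$-th smallest element of $A$. For $0<q<1$, $\mathrm{Mallows}(\mathbb{Z},q)$ is Gnedin and Olshanski's bi-infinite Mallows measure: the law of a random bijection $\Sigma$ of $\mathbb{Z}$ such that $\Sigma_I\sim\mathrm{Mallows}(I,q)$ for every finite interval of integers $I$, and, almost surely for every $i\in\mathbb{Z}$ one has $\Sigma_{I_n}(i)=\Sigma(i)$ for all sufficiently large $n$. It is also known that $\mathbb{P}(|\Sigma(i)-i|>m)=\Theta(q^m)$ uniformly in $i\in\mathbb{Z}$. *)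

(* Defs.v *)
From HB Require Import structures.
From mathcomp Require Import all_boot all_order all_algebra all_fingroup.
From mathcomp Require Import all_classical all_reals all_analysis.
Set Implicit Arguments. Unset Strict Implicit. Unset Printing Implicit Defensive.
Import Order.TTheory GRing.Theory Num.Theory.
Local Open Scope ring_scope.

Definition zintv (a : int) (n : nat) : seq int :=
  [seq a + (k%:Z) | k <- iota 0 n].

(* Pattern sigma_A of sigma on A = zintv a n:
   sigma_A(x) = a_(i) where sigma(x) is the i-th smallest element of sigma[A];
   since A is an interval, a_(i) = a + (i-1) = a + #{y in A | sigma y < sigma x}. *)
Definition pattern (s : int -> int) (a : int) (n : nat) (x : int) : int :=
  a + (count (fun y => s y < s x) (zintv a n))%:Z.

Definition inv_count (n : nat) (p : 'S_n) : nat :=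
  #|[set ij : 'I_n * 'I_n | (ij.1 < ij.2)%N && (p ij.2 < p ij.1)%N]|.

(* Mallows(I,q) probability of pi, for I = zintv a n identified with 'I_n
   via k |-> a + k (order preserving). *)
Definition mallows_prob (R : realType) (q : R) (n : nat) (p : 'S_n) : R :=
  q ^+ inv_count p / \sum_(p' : 'S_n) q ^+ inv_count p'.

(* Main.v *)
Require Import Defs.
From HB Require Import structures.
From mathcomp Require Import all_boot all_order all_algebra all_fingroup.
From mathcomp Require Import all_classical all_reals all_analysis.
From mathcomp Require Import zify ring lra.
Import Order.TTheory GRing.Theory Num.Theory.

Module CombM.
Import Order.TTheory GRing.Theory Num.Theory.
Local Open Scope ring_scope.

Section Comb.
Variable L : nat.

Definition tauf (v t : nat) (u : 'I_L) : nat :=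
  if (u : nat) == v then (v - t)%N else if ((v - t)%N <= u < v)%N then u.+1 else u.

Lemma tauf_lt (v : 'I_L) t (u : 'I_L) : (tauf v t u < L)%N.
Proof.
rewrite /tauf; have := ltn_ord u; have := ltn_ord v.
case: eqP => [->|_]; first lia.
by case: ifP => /= H; lia.
Qed.

Definition tauo (v : 'I_L) t (u : 'I_L) : 'I_L := Ordinal (tauf_lt v t u).

Lemma tauo_inj v t : injective (tauo v t).
Proof.
move=> u1 u2 /(congr1 val) /=; rewrite /tauf => H; apply/val_inj => /=.
move: H; case: (eqVneq (u1 : nat) v) => E1; case: (eqVneq (u2 : nat) v) => E2;
  (try case: ifP => H1); (try case: ifP => H2); lia.
Qed.

Definition tperm (v : 'I_L) t : 'S_L := perm (@tauo_inj v t).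

Lemma tperm_v (v : 'I_L) t : (tperm v t v : nat) = (v - t)%N.
Proof. by rewrite permE /= /tauf eqxx. Qed.

Lemma tperm_mono (v : 'I_L) t (u1 u2 : 'I_L) : u1 != v -> u2 != v ->
  ((tperm v t u1 : nat) < tperm v t u2)%N = (u1 < u2)%N.
Proof.
rewrite !permE /= /tauf => /eqP H1 /eqP H2.
have H1' : (u1 : nat) != v by apply/eqP => E; apply: H1; exact: val_inj.
have H2' : (u2 : nat) != v by apply/eqP => E; apply: H2; exact: val_inj.
rewrite (negbTE H1') (negbTE H2').
move/eqP: H1' => H1''; move/eqP: H2' => H2''.
case: ifP => A1; case: ifP => A2; apply/idP/idP; lia.
Qed.

Definition invset (p : 'S_L) := [set ij : 'I_L * 'I_L | (ij.1 < ij.2)%N && (p ij.2 < p ij.1)%N].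

Lemma inv_countE (p : 'S_L) : inv_count p = #|invset p|.
Proof. by []. Qed.

End Comb.
Arguments invset {L}.
Arguments tperm {L}.

Lemma card_lt_ord n (v : nat) : (v <= n)%N -> #|[set u : 'I_n | (u < v)%N]| = v.
Proof.
move=> vn.
have -> : [set u : 'I_n | (u < v)%N] = (widen_ord vn) @: [set: 'I_v].
  apply/setP => u; rewrite inE; apply/idP/imsetP => [uv|[x _ ->]]; last by rewrite /= ltn_ord.
  by exists (Ordinal uv) => //; apply/val_inj.
rewrite card_imset ?cardsT ?card_ord //.
by move=> x y /(congr1 val) /= H; apply/val_inj.
Qed.

Lemma invE0 n (p : 'S_n.+1) : inv_count p =
  (p ord0 + #|[set ij : 'I_n.+1 * 'I_n.+1 | (0 < ij.1)%N && (ij.1 < ij.2)%N && (p ij.2 < p ij.1)%N]|)%N.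
Proof.
rewrite inv_countE -(cardsID [set ij : 'I_n.+1 * 'I_n.+1 | ij.1 == ord0]); congr (_ + _)%N.
  have -> : invset p :&: [set ij : 'I_n.+1 * 'I_n.+1 | ij.1 == ord0] =
      (fun j => (ord0, j)) @: (p @^-1: [set u : 'I_n.+1 | (u < p ord0)%N]).
    apply/setP => [[i j]]; rewrite !inE /=; apply/idP/imsetP.
      case/andP => /andP [ij pji] /eqP i0; subst i.
      by exists j => //; rewrite !inE.
    case=> x; rewrite !inE => px [-> ->]; rewrite eqxx px andbT andbT.
    rewrite lt0n; apply/eqP => x0.
    have : x = ord0 by apply/val_inj.
    by move=> E; move: px; rewrite E ltnn.
  rewrite card_imset; last by move=> x y [].
  rewrite card_preimset; last exact: perm_inj.
  by rewrite card_lt_ord // ltnW.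
apply: eq_card => [[i j]]; rewrite !inE /=.
have -> : (i != ord0) = (0 < i)%N by rewrite lt0n; congr negb; apply/eqP/eqP => [->|H] //; exact: val_inj.
by rewrite andbA.
Qed.

Lemma ord_neq0 n (i : 'I_n.+1) : (0 < i)%N -> i != ord0.
Proof. by move=> H; apply/eqP => E; move: H; rewrite E. Qed.

Lemma inv_shift n (p : 'S_n.+1) t : (t <= p ord0)%N ->
  (inv_count (p * tperm (p ord0) t)%g + t = inv_count p)%N.
Proof.
move=> tp; rewrite !invE0 permM tperm_v.
set A := #|_|; set B := #|_|.
suff -> : A = B by lia.
apply: eq_card => [[i j]]; rewrite !inE /= !permM.
case: (ltnP 0 i) => //= i0; case: (ltnP i j) => //= ij.
have j0 : (0 < j)%N by apply: leq_ltn_trans ij.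
rewrite tperm_mono //; apply/eqP => /perm_inj E.
  by move: (@ord_neq0 _ j j0); rewrite E eqxx.
by move: (@ord_neq0 _ i i0); rewrite E eqxx.
Qed.

Lemma sum_first_ge (R : realType) (q : R) (q0 : 0 <= q) n t :
  \sum_(p : 'S_n.+1 | (t <= p ord0)%N) q ^+ inv_count p <=
  q ^+ t * \sum_(p : 'S_n.+1) q ^+ inv_count p.
Proof.
pose F (p : 'S_n.+1) := (p * tperm (p ord0) t)%g.
pose A := [set p : 'S_n.+1 | (t <= p ord0)%N].
have -> : \sum_(p : 'S_n.+1 | (t <= p ord0)%N) q ^+ inv_count p =
    q ^+ t * \sum_(p in A) q ^+ inv_count (F p).
  rewrite mulr_sumr; apply: eq_big => [p|p tp]; first by rewrite inE.
  by rewrite -exprD addnC -(@inv_shift _ p t tp).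
apply: ler_wpM2l; first exact: exprn_ge0.
have Finj : {in A &, injective F}.
  move=> p1 p2; rewrite !inE => t1 t2 E.
  have E0 := congr1 (fun s : 'S_n.+1 => val (s ord0)) E.
  move: E0; rewrite /F /= !permM !tperm_v => E0.
  have E1 : p1 ord0 = p2 ord0 by apply/val_inj => /=; lia.
  by move: E; rewrite /F E1 => /mulIg.
rewrite -(big_imset (fun s => q ^+ inv_count s) Finj) /=.
rewrite [X in _ <= X](bigID (mem (F @: A))) /= lerDl.
by apply: sumr_ge0 => i _; exact: exprn_ge0.
Qed.

Section RC.
Variable n : nat.
Definition rcf (p : 'S_n) (j : 'I_n) : 'I_n := rev_ord (p (rev_ord j)).
Lemma rcf_inj p : injective (rcf p).
Proof. by move=> x y /rev_ord_inj /perm_inj /rev_ord_inj. Qed.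
Definition rc p : 'S_n := perm (@rcf_inj p).
Lemma rcE p j : rc p j = rev_ord (p (rev_ord j)).
Proof. by rewrite permE. Qed.
Lemma rcK : involutive rc.
Proof. by move=> p; apply/permP => j; rewrite !rcE !rev_ordK. Qed.

Lemma inv_rc p : inv_count (rc p) = inv_count p.
Proof.
rewrite !inv_countE.
pose g (ij : 'I_n * 'I_n) := (rev_ord ij.2, rev_ord ij.1).
have ginv : involutive g by move=> [i j]; rewrite /g /= !rev_ordK.
have -> : invset (rc p) = g @: invset p.
  apply/setP => ij; apply/idP/imsetP.
    move=> H; exists (g ij); last by rewrite ginv.
    move: H; case: ij => i j; rewrite !inE /= !rcE /=.
    have := ltn_ord i; have := ltn_ord j; have := ltn_ord (p (rev_ord i)); have := ltn_ord (p (rev_ord j)).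
    lia.
  case=> [[i j]]; rewrite !inE /= => H ->; rewrite !rcE !rev_ordK /=.
  move: H; have := ltn_ord i; have := ltn_ord j; have := ltn_ord (p i); have := ltn_ord (p j).
  lia.
by rewrite card_imset //; exact: (can_inj ginv).
Qed.
End RC.
Arguments rc {n}.

Lemma sum_last_le (R : realType) (q : R) (q0 : 0 <= q) n t : (t <= n)%N ->
  \sum_(p : 'S_n.+1 | (p ord_max <= n - t)%N) q ^+ inv_count p <=
  q ^+ t * \sum_(p : 'S_n.+1) q ^+ inv_count p.
Proof.
move=> tn.
rewrite (reindex_inj (can_inj (@rcK n.+1))) /=.
rewrite [X in _ <= _ * X](reindex_inj (can_inj (@rcK n.+1))) /=.
have -> : \sum_(j : 'S_n.+1 | (rc j ord_max <= n - t)%N) q ^+ inv_count (rc j) =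
          \sum_(j : 'S_n.+1 | (t <= j ord0)%N) q ^+ inv_count j.
  apply: eq_big => [p|p _]; last by rewrite inv_rc.
  rewrite rcE /=.
  have -> : rev_ord (@ord_max n) = ord0 by apply/val_inj => /=; lia.
  have := ltn_ord (p ord0); lia.
under [X in _ <= _ * X]eq_bigr do rewrite inv_rc.
exact: sum_first_ge.
Qed.

Lemma Zpos (R : realType) (q : R) (q0 : 0 < q) n :
  0 < \sum_(p : 'S_n) q ^+ inv_count p.
Proof.
rewrite (bigD1 1%g) //= ltr_pwDl ?exprn_gt0 //.
by apply: sumr_ge0 => i _; rewrite exprn_ge0 // ltW.
Qed.

Lemma mallows_first (R : realType) (q : R) (q0 : 0 < q) n t :
  \sum_(p : 'S_n.+1 | (t <= p ord0)%N) mallows_prob q p <= q ^+ t.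
Proof.
rewrite /mallows_prob -mulr_suml ler_pdivrMr ?Zpos //.
by apply: sum_first_ge; rewrite ltW.
Qed.

Lemma mallows_last (R : realType) (q : R) (q0 : 0 < q) n t : (t <= n)%N ->
  \sum_(p : 'S_n.+1 | (p ord_max <= n - t)%N) mallows_prob q p <= q ^+ t.
Proof.
move=> tn; rewrite /mallows_prob -mulr_suml ler_pdivrMr ?Zpos //.
by apply: sum_last_le => //; rewrite ltW.
Qed.

End CombM.
Import CombM.

Module ProbM.
Import Order.TTheory GRing.Theory Num.Theory.
Local Open Scope ring_scope.
Local Open Scope classical_set_scope.

Lemma measure_bigsetU_le d (T : measurableType d) (R : realType)
  (mu : {measure set T -> \bar R}) (I : Type) (r : seq I) (Pr : pred I) (F : I -> set T) :
  (forall i, measurable (F i)) ->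
  (mu (\big[setU/set0]_(i <- r | Pr i) F i) <= \sum_(i <- r | Pr i) mu (F i))%E.
Proof.
move=> mF; elim: r => [|i r IH]; first by rewrite !big_nil measure0.
rewrite !big_cons; case: ifP => _ //.
apply: le_trans (leeD2l _ IH).
apply: measureU2 => //; exact: bigsetU_measurable.
Qed.

Lemma mem_zintv a n x : (x \in zintv a n) = (a <= x < a + n%:Z).
Proof.
apply/mapP/idP => [[k]|/andP [ax xa]].
  rewrite mem_iota add0n => /andP [_ kn] ->.
  by apply/andP; split; [rewrite lerDl | rewrite ltrD2l ltz_nat].
exists `|x - a|%N; last by rewrite gez0_abs ?subr_ge0 //; lia.
rewrite mem_iota add0n /=; rewrite -ltz_nat gez0_abs ?subr_ge0 //.
by rewrite ltrBlDl.
Qed.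

Section Prob.
Variables (R : realType) (q : R) (d : measure_display) (T : measurableType d)
  (P : probability T R) (Sigma : T -> int -> int).
Hypothesis hq0 : 0 < q.
Hypothesis Sinj : forall w, injective (Sigma w).
Hypothesis Smeas : forall i j : int, measurable [set w | Sigma w i = j].
Hypothesis Smallows : forall (a : int) (n : nat) (p : 'S_n),
     P [set w | forall k : 'I_n, pattern (Sigma w) a n (a + (k : nat)%:Z)
                                 = a + (p k : nat)%:Z]
     = (mallows_prob q p)%:E.

Lemma meas_lt_c x u : measurable [set w | u < Sigma w x].
Proof.
have -> : [set w | u < Sigma w x] =
  \bigcup_(v : int) (if u < v then [set w | Sigma w x = v] else set0).
  apply/seteqP; split => w /=.
    by move=> H; exists (Sigma w x) => //; rewrite H.
  by move=> [v _]; case: ifP => // uv ->.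
apply: countable_bigcupT_measurable; first exact: countableP.
by move=> v; case: ifP.
Qed.

Lemma meas_lt x y : measurable [set w | Sigma w x < Sigma w y].
Proof.
have -> : [set w | Sigma w x < Sigma w y] =
  \bigcup_(u : int) ([set w | Sigma w x = u] `&` [set w | u < Sigma w y]).
  apply/seteqP; split => w /=.
    by move=> H; exists (Sigma w x).
  by move=> [u _ [/= -> H]].
apply: countable_bigcupT_measurable; first exact: countableP.
by move=> u; apply: measurableI => //; exact: meas_lt_c.
Qed.

Lemma meas_count x s c :
  measurable [set w | count (fun y => Sigma w y < Sigma w x) s = c].
Proof.
elim: s c => [|y s IH] c /=.
  by case: c => [|c]; [rewrite (_ : [set _ | _] = setT) //; apply/seteqP; split
                     | rewrite (_ : [set _ | _] = set0) //; apply/seteqP; split].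
case: c => [|c].
  have -> : [set w | addn (Sigma w y < Sigma w x)%R (count (fun y => Sigma w y < Sigma w x) s) = 0%N] =
      ~` [set w | Sigma w y < Sigma w x] `&` [set w | count (fun y => Sigma w y < Sigma w x) s = 0%N].
    apply/seteqP; split => w /=; first by case: (Sigma w y < Sigma w x).
    by case=> /negP /negbTE -> ->.
  by apply: measurableI; [apply: measurableC; exact: meas_lt | exact: IH].
have -> : [set w | addn (Sigma w y < Sigma w x)%R (count (fun y => Sigma w y < Sigma w x) s) = c.+1] =
   ([set w | Sigma w y < Sigma w x] `&` [set w | count (fun y => Sigma w y < Sigma w x) s = c]) `|`
   (~` [set w | Sigma w y < Sigma w x] `&` [set w | count (fun y => Sigma w y < Sigma w x) s = c.+1]).
  apply/seteqP; split => w /=.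
    by case: (Sigma w y < Sigma w x) => /= H; [left; split => //; lia | right; split].
  by case=> [[-> ->]|[/negP /negbTE -> ->]].
apply: measurableU; apply: measurableI => //; try exact: meas_lt.
exact: measurableC (meas_lt _ _).
Qed.

Definition PatEv (a : int) (n : nat) (p : 'S_n) : set T :=
  [set w | forall k : 'I_n, pattern (Sigma w) a n (a + (k : nat)%:Z) = a + (p k : nat)%:Z].

Lemma bigsetI_seqP (I : eqType) (r : seq I) (F : I -> set T) w :
  (\big[setI/setT]_(i <- r) F i) w <-> (forall i, i \in r -> F i w).
Proof.
elim: r => [|i r IH]; first by rewrite big_nil; split.
rewrite big_cons; split.
  by case=> H1 /IH H2 j; rewrite inE => /orP [/eqP ->|/H2].
move=> H; split; first by apply: H; rewrite inE eqxx.
by apply/IH => j jr; apply: H; rewrite inE jr orbT.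
Qed.

Lemma meas_PatEv a n p : measurable (PatEv a n p).
Proof.
have -> : PatEv a n p = \big[setI/setT]_(k <- enum 'I_n)
    [set w | count (fun y => Sigma w y < Sigma w (a + (k : nat)%:Z)) (zintv a n) = p k].
  apply/seteqP; split => w.
    move=> H; apply/bigsetI_seqP => k _ /=.
    by move: (H k); rewrite /pattern => /addrI [].
  move/bigsetI_seqP => H k; rewrite /pattern.
  by rewrite (H k) // mem_enum.
by apply: bigsetI_measurable => k _; exact: meas_count.
Qed.


Lemma size_zintv a n : size (zintv a n) = n.
Proof. by rewrite size_map size_iota. Qed.

Lemma zintv_mem a n (k : 'I_n) : a + (k : nat)%:Z \in zintv a n.
Proof. by rewrite mem_zintv lerDl ltrD2l ltz_nat ltn_ord andbT. Qed.

Lemma count_lt_size w a n (k : 'I_n) :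
  (count (fun y => (Sigma w y < Sigma w (a + (k : nat)%:Z))%R) (zintv a n) < n)%N.
Proof.
set f := (fun y => _).
have := count_predC f (zintv a n); rewrite size_zintv => E.
suff : (0 < count (predC f) (zintv a n))%N by lia.
rewrite -has_count.
by apply/hasP; exists (a + (k : nat)%:Z); [exact: zintv_mem | rewrite /= /f ltxx].
Qed.

Lemma count_lt_sub (I : eqType) (s : seq I) (f g : pred I) x :
  (forall y, f y -> g y) -> x \in s -> g x -> ~~ f x -> (count f s < count g s)%N.
Proof.
move=> fg; elim: s => [|y s IH] //=; rewrite inE => /orP [/eqP <-|xs] gx fx.
  rewrite gx (negbTE fx) /= add0n add1n ltnS; exact: sub_count.
have := IH xs gx fx; case Hf : (f y); first by rewrite (fg _ Hf) /=; lia.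
by case: (g y) => /=; lia.
Qed.

Definition rk w a n (k : 'I_n) : 'I_n := Ordinal (count_lt_size w a n k).
Arguments rk w a {n} k.

Lemma rk_lt w a n (k1 k2 : 'I_n) :
  Sigma w (a + (k1 : nat)%:Z) < Sigma w (a + (k2 : nat)%:Z) -> (rk w a k1 < rk w a k2)%N.
Proof.
move=> H; rewrite /rk /=; apply: (@count_lt_sub _ _ _ _ (a + (k1 : nat)%:Z)).
- by move=> y /= Hy; apply: lt_trans H.
- exact: zintv_mem.
- exact: H.
- by rewrite /= ltxx.
Qed.

Arguments rk_lt {w a n k1 k2}.

Lemma rk_inj w a n : injective (@rk w a n).
Proof.
move=> k1 k2 E; apply/eqP/negPn/negP => ne.
have ne' : Sigma w (a + (k1 : nat)%:Z) != Sigma w (a + (k2 : nat)%:Z).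
  apply/eqP => /Sinj /addrI [] /val_inj E'; by rewrite E' eqxx in ne.
case: (ltgtP (Sigma w (a + (k1 : nat)%:Z)) (Sigma w (a + (k2 : nat)%:Z))) ne' => // H _.
  by move: (rk_lt H); rewrite E ltnn.
by move: (rk_lt H); rewrite E ltnn.
Qed.

Definition patperm w a n : 'S_n := perm (@rk_inj w a n).

Lemma patperm_ev w a n : PatEv a n (patperm w a n) w.
Proof. by move=> k; rewrite /pattern permE. Qed.

Lemma patperm_lt w a n (k1 k2 : 'I_n) :
  Sigma w (a + (k1 : nat)%:Z) < Sigma w (a + (k2 : nat)%:Z) ->
  (patperm w a n k1 < patperm w a n k2)%N.
Proof. by rewrite !permE; exact: rk_lt. Qed.
Arguments patperm_lt {w a n k1 k2}.

Lemma bigsetU_seqP (I : eqType) (r : seq I) (Pr : pred I) (F : I -> set T) w :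
  (\big[setU/set0]_(i <- r | Pr i) F i) w <-> (exists i, [/\ i \in r, Pr i & F i w]).
Proof.
elim: r => [|i r IH]; first by rewrite big_nil; split => // [[i []]].
rewrite big_cons; case: ifP => Pi; split.
- case=> [H|/IH [j [jr Pj Fj]]]; first by exists i; split => //; rewrite inE eqxx.
  by exists j; split => //; rewrite inE jr orbT.
- case=> j [/[!inE] /orP [/eqP ->|jr] Pj Fj]; first by left.
  by right; apply/IH; exists j.
- by move/IH => [j [jr Pj Fj]]; exists j; split => //; rewrite inE jr orbT.
- case=> j [/[!inE] /orP [/eqP ji|jr] Pj Fj]; first by subst j; rewrite Pi in Pj.
  by apply/IH; exists j.
Qed.

Definition UF a n t := \big[setU/set0]_(p : 'S_n.+1 | (t <= p ord0)%N) PatEv a n.+1 p.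
Definition UL a n t := \big[setU/set0]_(p : 'S_n.+1 | (p ord_max <= n - t)%N) PatEv a n.+1 p.

Lemma meas_UF a n t : measurable (UF a n t).
Proof. by apply: bigsetU_measurable => p _; exact: meas_PatEv. Qed.
Lemma meas_UL a n t : measurable (UL a n t).
Proof. by apply: bigsetU_measurable => p _; exact: meas_PatEv. Qed.

Lemma P_UF a n t : (P (UF a n t) <= (q ^+ t)%:E)%E.
Proof.
apply: le_trans (@measure_bigsetU_le _ _ _ P _ _ _ _ (meas_PatEv a n.+1)) _.
rewrite (eq_bigr (fun p => (mallows_prob q p)%:E)); last by move=> p _; exact: Smallows.
by rewrite sumEFin lee_fin; exact: mallows_first.
Qed.

Lemma P_UL a n t : (t <= n)%N -> (P (UL a n t) <= (q ^+ t)%:E)%E.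
Proof.
move=> tn; apply: le_trans (@measure_bigsetU_le _ _ _ P _ _ _ _ (meas_PatEv a n.+1)) _.
rewrite (eq_bigr (fun p => (mallows_prob q p)%:E)); last by move=> p _; exact: Smallows.
by rewrite sumEFin lee_fin; exact: mallows_last.
Qed.

Definition InvSet a n := UF a n (n.+1)./2 `|` UL a n (n.+1 - (n.+1)./2).

Lemma meas_InvSet a n : measurable (InvSet a n).
Proof. exact: measurableU (meas_UF _ _ _) (meas_UL _ _ _). Qed.

Lemma P_InvSet a n : (0 < n)%N ->
  (P (InvSet a n) <= (q ^+ (n.+1)./2 + q ^+ (n.+1 - (n.+1)./2))%:E)%E.
Proof.
move=> n0; apply: le_trans (measureU2 _ (meas_UF _ _ _) (meas_UL _ _ _)) _.
rewrite EFinD; apply: leeD; first exact: P_UF.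
by apply: P_UL; lia.
Qed.

Lemma InvSet_sub w a n : (0 < n)%N -> Sigma w (a + n%:Z) < Sigma w a -> InvSet a n w.
Proof.
move=> n0 H.
have H' : Sigma w (a + ((@ord_max n) : nat)%:Z) < Sigma w (a + ((@ord0 n) : nat)%:Z).
  by rewrite /= addr0.
move: (patperm_lt H'); set pi := patperm w a n.+1 => Hpi.
have ev := patperm_ev w a n.+1.
have hh := odd_double_half n.+1; rewrite -muln2 in hh.
case: (leqP (n.+1)./2 (pi ord0)) => h.
  by left; apply/bigsetU_seqP; exists pi; split => //; exact: mem_index_enum.
right; apply/bigsetU_seqP; exists pi; split; [exact: mem_index_enum | | exact: ev].
move: (ltn_ord (pi ord0)) (ltn_ord (pi ord_max)) hh h Hpi n0.
case: (odd n.+1); set h2 := (n.+1)./2; lia.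
Qed.

End Prob.

End ProbM.
Import ProbM.

Module RealM.
Import Order.TTheory GRing.Theory Num.Theory.
Import archimedean.Num.Theory.
Local Open Scope ring_scope.

Section Real.
Variable R : realType.

Lemma key_ln (n m : nat) : (1 <= n)%N -> (n <= m)%N ->
  ln (m%:R : R) ^+ 2 / 4 <= m%:R - n%:R + ln (n%:R : R) ^+ 2.
Proof.
move=> n1 nm.
have n1' : (1 : R) <= n%:R by rewrite ler1n.
have m1' : (1 : R) <= m%:R by rewrite ler1n (leq_trans n1).
have npos : (n%:R : R) \is Num.pos by rewrite posrE (lt_le_trans ltr01).
have mpos : (m%:R : R) \is Num.pos by rewrite posrE (lt_le_trans ltr01).
have nm' : (n%:R : R) <= m%:R by rewrite ler_nat.
set a := ln (n%:R : R); set b := ln (m%:R : R).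
have a0 : 0 <= a by exact: ln_ge0.
have ab : a <= b by rewrite /a /b ler_ln.
case: (leP b (2 * a)) => h.
  have h2 : b * b <= 4 * (a * a) by nra.
  rewrite !expr2; nra.
set s := expR (b / 2).
have s0 : 0 < s by exact: expR_gt0.
have lns : ln s = b / 2 by rewrite /s expRK.
have s2 : s ^+ 2 = m%:R.
  by rewrite /s -expRM_natl mulrC -mulrA mulVf ?pnatr_eq0 // mulr1 /b lnK.
have ns : n%:R < s.
  rewrite -(lnK npos) /s ltr_expR -/a; lra.
have s1 : 1 <= s by rewrite /s -[X in X <= _]expR0 ler_expR; lra.
have hs : 1 + ln s <= s.
  by have := expR_ge1Dx (ln s); rewrite lnK // posrE.
rewrite lns in hs.
rewrite -s2 !expr2; nra.
Qed.


Lemma qpow (q : R) (e : nat) (x : R) : 0 < q -> q < 1 -> x <= e%:R ->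
  q ^+ e <= expR (ln q * x).
Proof.
move=> q0 q1 xe.
rewrite -{1}(lnK (x:=q)) ?posrE // -expRM_natl ler_expR.
have : ln q < 0 by apply: ln_lt0; rewrite q0.
nra.
Qed.

Lemma Mbig (C : R) : exists M0 : nat, forall m : nat, (M0 <= m)%N ->
  (1 <= m)%N /\ C <= ln (m%:R : R).
Proof.
exists (Num.trunc (expR C)).+1 => m Mm; split; first by apply: leq_trans Mm.
have h := truncnS_gt (expR C).
have h2 : expR C < m%:R by apply: lt_le_trans h _; rewrite ler_nat.
rewrite -[X in X <= _](expRK C) ler_ln ?posrE ?expR_gt0 //; first exact: ltW.
exact: lt_trans (expR_gt0 C) h2.
Qed.

Lemma tele_sum (K : R) n :
  \sum_(0 <= k < n) K / (k.+1%:R * k.+2%:R) = K - K / n.+1%:R.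
Proof.
elim: n => [|n IH]; first by rewrite big_nil divr1 subrr.
rewrite big_nat_recr //= IH.
have h1 : (n.+1%:R : R) != 0 by rewrite pnatr_eq0.
have h2 : (n.+2%:R : R) != 0 by rewrite pnatr_eq0.
rewrite -[n.+2]addn1 natrD -[n.+1]addn1 natrD.
rewrite -[n.+2]addn1 natrD -[n.+1]addn1 natrD in h2.
rewrite -[n.+1]addn1 natrD in h1.
field; by rewrite h1 h2.
Qed.


Lemma final_bound (q : R) : 0 < q -> q < 1 -> exists K : R, 0 < K /\ forall m : nat,
  1 <= K / (m.+1%:R * m.+2%:R) \/
  8 * m.+1%:R * expR (ln q * (ln (m%:R : R) ^+ 2 / 4 / 2)) <= K / (m.+1%:R * m.+2%:R).
Proof.
move=> q0 q1.
set c := - ln q.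
have c0 : 0 < c by rewrite /c oppr_gt0; apply: ln_lt0; rewrite q0.
have [M0 HM0] := Mbig (32 / c).
exists (96 + (M0.+1 * M0.+2)%:R); split.
  by apply: ltr_wpDr => //; rewrite ler0n.
move=> m.
have D0 : 0 < (m.+1%:R * m.+2%:R : R) by rewrite mulr_gt0 ?ltr0Sn.
case: (ltnP m M0) => hm.
  left; rewrite ler_pdivlMr // mul1r.
  have : (m.+1 * m.+2 <= M0.+1 * M0.+2)%N by apply: leq_mul; lia.
  rewrite -(ler_nat R) natrM => h; apply: le_trans h _.
  by rewrite lerDr.
right; have [m1 hL] := HM0 m hm.
set L := ln (m%:R : R) in hL *.
have hcL' := hL.
set x := (m%:R : R).
have x1 : 1 <= x by rewrite /x ler1n.
have x0 : 0 < x by exact: lt_le_trans ltr01 x1.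
have hcL : 32 <= c * L by move: hL; rewrite ler_pdivrMr // mulrC.
have L0 : 0 <= L by apply: le_trans hcL'; rewrite divr_ge0 // ltW.
have E1 : expR (ln q * (L ^+ 2 / 4 / 2)) <= (x ^+ 4)^-1.
  have -> : (x ^+ 4)^-1 = expR (- (4%:R * L)).
    by rewrite expRN expRM_natl /L lnK // posrE.
  rewrite ler_expR.
  have -> : ln q = - c by rewrite /c opprK.
  rewrite !expr2; nra.
have S1 : m.+1%:R = x + 1 by rewrite -addn1 natrD.
have S2 : m.+2%:R = x + 2 by rewrite -addn2 natrD.
apply: le_trans (_ : 8 * m.+1%:R * (x ^+ 4)^-1 <= _).
  rewrite ler_wpM2l //; rewrite mulr_ge0 // ler0n.
rewrite ler_pdivlMr // mulrAC ler_pdivrMr ?exprn_gt0 //.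
rewrite S1 S2 !exprS expr0 mulr1.
have h1 : 0 <= x * x by nra.
have h2 : 0 <= x * x * x by nra.
have h3 : (0 : R) <= (M0.+1 * M0.+2)%:R by rewrite ler0n.
nra.
Qed.

End Real.

End RealM.
Import RealM.

Local Open Scope ring_scope.
Local Open Scope classical_set_scope.

Lemma zintv_cons a n : zintv a n.+1 = a :: zintv (a + 1) n.
Proof.
rewrite /zintv /= addr0; congr cons.
rewrite -[1%N]addn0 iotaDl -map_comp; apply: eq_map => k /=; lia.
Qed.

Lemma zintv_rcons a n : zintv a n.+1 = rcons (zintv a n) (a + n%:Z).
Proof. by rewrite /zintv -addn1 iotaD map_cat /= cats1 add0n. Qed.

Lemma pat_left (s : int -> int) a n i : s a < s i ->
  pattern s a n.+1 i = pattern s (a + 1) n i.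
Proof. by move=> H; rewrite /pattern zintv_cons /= H; lia. Qed.

Lemma pat_right (s : int -> int) a n i : s i < s (a + n%:Z) ->
  pattern s a n.+1 i = pattern s a n i.
Proof.
move=> H; rewrite /pattern zintv_rcons -cats1 count_cat /=.
by rewrite ltNge (ltW H) /= !addn0.
Qed.

Lemma chainJ (s : int -> int) n i : s (- n%:Z) < s i ->
  pattern s (1 - n%:Z) (2 * n) i = pattern s (- n%:Z) (2 * n).+1 i.
Proof. by move=> H; rewrite pat_left // addrC. Qed.

Lemma chainI (s : int -> int) m i : s (- (m.+1%:Z)) < s i -> s i < s (m%:Z + 1) ->
  pattern s (- (m.+1%:Z)) (2 * m.+1).+1 i = pattern s (- m%:Z) (2 * m).+1 i.
Proof.
move=> H1 H2; rewrite pat_left //.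
have -> : (- (m.+1%:Z) + 1) = - m%:Z by lia.
have -> : (2 * m.+1 = (2 * m).+2)%N by lia.
rewrite pat_right //.
have -> : (- m%:Z + ((2 * m).+1)%:Z) = m%:Z + 1 by lia.
done.
Qed.

Lemma ibounds (i : int) (n m : nat) : `|i| <= n%:Z - 1 -> (n <= m)%N ->
  [/\ (0 < absz (i + m%:Z)%R)%N, (absz (i + m%:Z)%R < (2 * m).+2)%N, (absz (i + m%:Z)%R)%:Z = i + m%:Z
      & i != - m%:Z] /\
  [/\ (0 < absz (m%:Z + 1 - i)%R)%N, (absz (m%:Z + 1 - i)%R < (2 * m).+2)%N,
      (absz (m%:Z + 1 - i)%R)%:Z = m%:Z + 1 - i & i != m%:Z + 1].
Proof.
move=> h1 h2.
have h3 : 0 <= i + m%:Z by lia.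
have h4 : 0 <= m%:Z + 1 - i by lia.
have e1 := gez0_abs h3; have e2 := gez0_abs h4.
split; split; try lia; apply/eqP; lia.
Qed.

Theorem lemma5p1 (R : realType) (q : R) (hq0 : 0 < q) (hq1 : q < 1)
  (d : measure_display) (T : measurableType d) (P : probability T R)
  (Sigma : T -> int -> int)
  (Sbij : forall w, bijective (Sigma w))
  (Smeas : forall i j : int, measurable [set w | Sigma w i = j])
  (Smallows : forall (a : int) (n : nat) (p : 'S_n),
     P [set w | forall k : 'I_n, pattern (Sigma w) a n (a + (k : nat)%:Z)
                                 = a + (p k : nat)%:Z]
     = (mallows_prob q p)%:E)
  (Sconv : {ae P, forall w, forall i : int, exists M : nat, forall n : nat,
     (M <= n)%N -> pattern (Sigma w) (- (n%:Z)) (2 * n).+1 i = Sigma w i}) :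
  {ae P, forall w, exists N : nat, forall n : nat, (N <= n)%N ->
     forall i : int, (`|i|%:~R : R) <= n%:R - (ln (n%:R : R)) ^+ 2 ->
       pattern (Sigma w) (- (n%:Z)) (2 * n).+1 i = Sigma w i /\
       pattern (Sigma w) (1 - n%:Z) (2 * n) i = Sigma w i}.
Proof.
have Sinj : forall w, injective (Sigma w) := fun w => bij_inj (Sbij w).
pose IS := @InvSet d T Sigma.
have mI : forall a n, measurable (IS a n) := @meas_InvSet R q d T Sigma hq0 Smeas.
have PI := @P_InvSet R q d T P Sigma hq0 Smeas Smallows.
have SI := @InvSet_sub R q d T Sigma hq0 Sinj.
pose g (m : nat) : R := ln (m%:R : R) ^+ 2 / 4.
pose Bset (m : nat) : set T :=
  \big[setU/set0]_(k < (2 * m).+2 | (1 <= k)%N && (g m <= (k : nat)%:R))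
     (IS (- (m%:Z)) k `|` IS (m%:Z + 1 - (k : nat)%:Z) k).
have mB : forall m, measurable (Bset m).
  move=> m; apply: bigsetU_measurable => k _.
  by apply: measurableU; exact: mI.
pose E (m : nat) := expR (ln q * (g m / 2)).
have PB : forall m, (P (Bset m) <= (8 * m.+1%:R * E m)%:E)%E.
  move=> m.
  apply: le_trans (@measure_bigsetU_le _ _ _ P _ _ _ _
     (fun k : 'I_(2 * m).+2 => measurableU _ _ (mI _ _) (mI _ _))) _.
  apply: (@le_trans _ _ (\sum_(k < (2 * m).+2 | (1 <= k)%N && (g m <= (k : nat)%:R)) (4 * E m)%:E)).
    apply: lee_sum => k /andP [k1 gk].
    apply: le_trans (measureU2 _ (mI _ _) (mI _ _)) _.
    have hE : q ^+ (k.+1)./2 + q ^+ (k.+1 - (k.+1)./2) <= 2 * E m.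
      have hh := odd_double_half k.+1; rewrite -muln2 in hh.
      have gk' : g m / 2 <= (k : nat)%:R / 2 by rewrite ler_pM2r.
      rewrite -[2]/(1 + 1) mulrDl mul1r.
      apply: lerD; apply: (@qpow R q _ (g m / 2) hq0 hq1); apply: le_trans gk' _;
        rewrite ler_pdivrMr // -natrM ler_nat; move: hh; case: (odd k.+1); lia.
    apply: le_trans (leeD (PI _ _ k1) (PI _ _ k1)) _.
    by rewrite -EFinD lee_fin; lra.
  rewrite sumEFin lee_fin big_mkcond /=.
  apply: le_trans (_ : \sum_(k < (2 * m).+2) 4 * E m <= _).
    by apply: ler_sum => k _; case: ifP => _ //; rewrite mulr_ge0 // expR_ge0.
  rewrite big_const_ord iter_addr addr0 -[4 * E m *+ _]mulr_natr.
  have -> : (((2 * m).+2)%:R : R) = 2 * m.+1%:R by rewrite -natrM; congr _%:R; lia.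
  by rewrite le_eqVlt; apply/orP; left; apply/eqP; ring.
have [K [K0 HK]] := @final_bound R q hq0 hq1.
have PB2 : forall m, (P (Bset m) <= (K / (m.+1%:R * m.+2%:R))%:E)%E.
  move=> m; case: (HK m) => h.
    by apply: le_trans (probability_le1 P (mB m)) _; rewrite lee_fin.
  by apply: le_trans (PB m) _; rewrite lee_fin.
have v0 : forall m : nat, 0 <= K / (m.+1%:R * m.+2%:R) :> R.
  by move=> m; rewrite divr_ge0 ?ltW // mulr_ge0.
have sumB : (\sum_(m <oo) P (Bset m) < +oo)%E.
  apply: (@le_lt_trans _ _ K%:E); last by rewrite ltry.
  apply: le_trans (lee_nneseries _ (fun m _ => PB2 m)) _.
    by move=> i _ _; exact: measure_ge0.
  have nd : nondecreasing_seq (fun n => \sum_(0 <= i < n) ((K / (i.+1%:R * i.+2%:R))%:E))%E.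
    by apply: ereal_nondecreasing_series => i _ _; rewrite lee_fin.
  rewrite (cvg_lim _ (ereal_nondecreasing_cvgn nd)) //.
  apply: ub_ereal_sup => _ [n _ <-] /=.
  rewrite sumEFin lee_fin tele_sum gerBl //.
  by rewrite divr_ge0 ?ltW.
have L0 := lim_sup_set_cvg0 mB sumB.
have Hls : \forall w \ae P, ~ lim_sup_set Bset w.
  exists (lim_sup_set Bset); split => //.
    apply: bigcap_measurable => // k _; apply: bigcup_measurable => j _; exact: mB.
  by move=> w /= H; apply: contrapT.
apply: (filterS2 _ _ Sconv Hls) => w Hc Hn.
have [n0 Hn0] : exists n0, forall j, (n0 <= j)%N -> ~ Bset j w.
  apply: contrapT => H; apply: Hn => n _.
  apply: contrapT => H2; apply: H; exists n => j nj Bj; apply: H2; exists j => //.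
have [M1 HM1] := @Mbig R 1.
exists (maxn n0 M1) => n nN i Hi.
have [n1 lnn] := HM1 n (leq_trans (leq_maxr _ _) nN).
have nn0 : (n0 <= n)%N := leq_trans (leq_maxl _ _) nN.
have iZ : (`|i| <= n%:Z - 1)%R.
  rewrite -(ler_int R) rmorphB /= -!pmulrn; apply: le_trans Hi _.
  have : 1 <= ln (n%:R : R) ^+ 2 by rewrite expr2; nra.
  lra.
have iR : - (`|i|%:~R : R) <= i%:~R /\ i%:~R <= (`|i|%:~R : R).
  split; first by rewrite -rmorphN ler_int lerNl -normrN ler_norm.
  by rewrite ler_int ler_norm.
have gap : forall m, (n <= m)%N ->
    Sigma w (- m%:Z) < Sigma w i /\ Sigma w i < Sigma w (m%:Z + 1).
  move=> m nm.
  have Bm := Hn0 m (leq_trans nn0 nm).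
  have kr := @key_ln R n m n1 nm.
  have mn' : (n%:R : R) <= m%:R by rewrite ler_nat.
  have [[k1 klt kE ne1] [k1' klt' kE' ne2]] := @ibounds i n m iZ nm.
  split.
    rewrite ltNge; apply/negP => H.
    apply: Bm; apply/bigsetU_seqP; exists (Ordinal klt); split.
    - exact: mem_index_enum.
    - apply/andP; split; first exact: k1.
      have -> : ((Ordinal klt : nat)%:R : R) = i%:~R + m%:R.
        by rewrite /= pmulrn kE rmorphD /= -pmulrn.
      rewrite /g; lra.
    - left; apply: SI => /=; first exact: k1.
      rewrite kE (_ : - m%:Z + (i + m%:Z) = i); last by ring.
      rewrite lt_neqAle H andbT; apply/eqP => /Sinj E1; by move: ne1; rewrite E1 eqxx.
  rewrite ltNge; apply/negP => H.
  apply: Bm; apply/bigsetU_seqP; exists (Ordinal klt'); split.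
  - exact: mem_index_enum.
  - apply/andP; split; first exact: k1'.
    have -> : ((Ordinal klt' : nat)%:R : R) = m%:R + 1 - i%:~R.
      by rewrite /= pmulrn kE' !rmorphB rmorphD /= -!pmulrn.
    rewrite /g; lra.
  - right; apply: SI => /=; first exact: k1'.
    rewrite kE' subrK (_ : m%:Z + 1 - (m%:Z + 1 - i) = i); last by ring.
    rewrite lt_neqAle H andbT; apply/eqP => /Sinj E1; by move: ne2; rewrite E1 eqxx.
have step : forall m, (n <= m)%N ->
    pattern (Sigma w) (- m%:Z) (2 * m).+1 i = pattern (Sigma w) (- n%:Z) (2 * n).+1 i.
  elim=> [|m IH] nm; first by have -> : n = 0%N by lia.
  case: (eqVneq n m.+1) => [<- //|ne].
  have nm' : (n <= m)%N by lia.
  rewrite chainI ?IH //; first exact: (gap m.+1 nm).1.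
  exact: (gap m nm').2.
have [M HM] := Hc i.
have eqI : pattern (Sigma w) (- n%:Z) (2 * n).+1 i = Sigma w i.
  by rewrite -(HM (maxn M n) (leq_maxl _ _)) step // leq_maxr.
split => //.
by rewrite chainJ // (gap n (leqnn n)).1.
Qed.
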